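(* Let $L=2U\oplus L_0$ be an even lattice of signature $(2,n)$, $n\ge3$, such that every isotropic subgroup of the discriminant group $(A_L,q_L)$ is cyclic. Then the closure in the Baily–Borel compactification $\mathcal F_L^*$ of every $1$-dimensional cusp contains the standard $0$-dimensional cusp.
   Context: $U$ is the hyperbolic plane; $A_L=L^\vee/L$ with discriminant quadratic form $q_L\colon A_L\to\mathbb Q/2\mathbb Z$; a subgroup $H\subset A_L$ is isotropic if $q_L|_H=0$. $\mathcal D_L$ is one of the two components of $\{[w]\in\mathbb P(L\otimes\mathbb C)\mid (w,w)=0,(w,\bar w)>0\}$, $\widetilde{\mathrm O}^+(L)$ is the subgroup of $\mathrm O(L)$ preserving $\mathcal D_L$ and acting trivially on $A_L$, and $\mathcal F_L=\widetilde{\mathrm O}^+(L)\backslash\mathcal D_L$. The $0$-dimensional cusps of $\mathcal F_L^*$ correspond to $\widetilde{\mathrm O}^+(L)$-orbits of primitive isotropic vectors of $L$, and the $1$-dimensional cusps to orbits of primitive totally isotropic rank-$2$ sublattices $E\subset L$; the closure of the $1$-dimensional cusp of $E$ contains the $0$-dimensional cusps of the primitive isotropic vectors lying in $E$. All primitive isotropic vectors $v$ with $\mathrm{div}(v)=1$ (where $\mathrm{div}(v)\mathbb Z=(v,L)$) form a single orbit; the corresponding cusp is called the standard $0$-dimensional cusp. *)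

(* Defs.v *)
From HB Require Import structures.
From mathcomp Require Import all_boot all_order all_algebra.
Set Implicit Arguments. Unset Strict Implicit. Unset Printing Implicit Defensive.
Import Order.TTheory GRing.Theory Num.Theory.
Local Open Scope ring_scope.

(* A lattice of rank m is modelled as Z^m inside Q^m (row vectors),
   with the bilinear form given by an integral Gram matrix G. *)

Definition isInt (q : rat) : Prop := exists z : int, q = z%:~R.

Definition bform (m : nat) (G : 'M[int]_m) (x y : 'rV[rat]_m) : rat :=
  (x *m map_mx (fun z : int => z%:~R) G *m y^T) 0 0.

Definition lattice_vec (m : nat) (x : 'rV[rat]_m) : Prop :=
  forall i, isInt (x 0 i).

Definition dual_vec (m : nat) (G : 'M[int]_m) (x : 'rV[rat]_m) : Prop :=
  forall y, lattice_vec y -> isInt (bform G x y).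

Definition primitive_vec (m : nat) (v : 'rV[rat]_m) : Prop :=
  [/\ lattice_vec v, v != 0 &
      forall d : nat, (1 < d)%N -> ~ lattice_vec (d%:R^-1 *: v)].

Definition isotropic_vec (m : nat) (G : 'M[int]_m) (v : 'rV[rat]_m) : Prop :=
  bform G v v = 0.

Definition div_is (m : nat) (G : 'M[int]_m) (v : 'rV[rat]_m) (d : int) : Prop :=
  forall z : int,
    (exists w, lattice_vec w /\ bform G v w = z%:~R) <-> (d %| z)%Z.

(* Subgroups H of A_L = L^v / L correspond to additive subgroups S with
   L <= S <= L^v;  H is isotropic iff q_L = 0 on H, i.e. (x,x) in 2Z for x in S;
   H is cyclic iff S = Z y + L for some y. *)
Definition AL_subgroup (m : nat) (G : 'M[int]_m) (S : 'rV[rat]_m -> Prop) : Prop :=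
  [/\ forall x, S x -> dual_vec G x,
      forall x, lattice_vec x -> S x,
      forall x y, S x -> S y -> S (x + y) &
      forall x, S x -> S (- x)].

Definition AL_isotropic (m : nat) (G : 'M[int]_m) (S : 'rV[rat]_m -> Prop) : Prop :=
  forall x, S x -> exists z : int, bform G x x = (2 * z)%:~R.

Definition AL_cyclic (m : nat) (S : 'rV[rat]_m -> Prop) : Prop :=
  exists y, S y /\
    forall x, S x <-> exists (k : int) (l : 'rV[rat]_m),
                        lattice_vec l /\ x = k%:~R *: y + l.

Definition isotropic_subgroups_cyclic (m : nat) (G : 'M[int]_m) : Prop :=
  forall S, AL_subgroup G S -> AL_isotropic G S -> AL_cyclic S.

(* Gram matrix of 2U = U + U, U the hyperbolic plane [[0,1],[1,0]] *)
Definition gram2U : 'M[int]_4 :=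
  \matrix_(i, j) (if ((i + j == 1)%N || (i + j == 5)%N) then 1 else 0).

Definition gram2U_plus (k : nat) (G0 : 'M[int]_k) : 'M[int]_(4 + k) :=
  block_mx gram2U 0 0 G0.

Definition even_gram (k : nat) (G0 : 'M[int]_k) : Prop :=
  G0^T = G0 /\ forall i, (2 %| G0 i i)%Z.

Definition neg_definite (k : nat) (G0 : 'M[int]_k) : Prop :=
  forall x : 'rV[rat]_k, x != 0 -> bform G0 x x < 0.

Definition prim_tot_isotropic_rank2 (m : nat) (G : 'M[int]_m) (e1 e2 : 'rV[rat]_m) : Prop :=
  [/\ lattice_vec e1, lattice_vec e2,
      (forall p q : rat, p *: e1 + q *: e2 = 0 -> p = 0 /\ q = 0),
      [/\ bform G e1 e1 = 0, bform G e1 e2 = 0 & bform G e2 e2 = 0] &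
      (forall (x : 'rV[rat]_m) (p q : rat), lattice_vec x -> x = p *: e1 + q *: e2 ->
          isInt p /\ isInt q)].

(* The closure of the 1-dim cusp of E contains the 0-dim cusp of every primitive
   isotropic v in E; that 0-dim cusp is the standard one iff v lies in the
   orbit of div-1 primitive isotropic vectors, i.e. iff div(v) = 1. *)
Definition closure_contains_standard_cusp (m : nat) (G : 'M[int]_m) (e1 e2 : 'rV[rat]_m) : Prop :=
  exists a b : int, let v := a%:~R *: e1 + b%:~R *: e2 in
    [/\ primitive_vec v, isotropic_vec G v & div_is G v 1].

(* Main.v *)
Require Import Defs.
From HB Require Import structures.
From mathcomp Require Import all_boot all_order all_algebra.
From mathcomp Require Import ring lra.
Import Order.TTheory GRing.Theory Num.Theory.
Local Open Scope ring_scope.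
Set Implicit Arguments. Unset Strict Implicit. Unset Printing Implicit Defensive.

Lemma isInt_int (z : int) : isInt z%:~R. Proof. by exists z. Qed.
Lemma isInt0 : isInt 0. Proof. by exists 0. Qed.
Lemma isIntD x y : isInt x -> isInt y -> isInt (x + y).
Proof. by move=> [a ->] [b ->]; exists (a + b); rewrite intrD. Qed.
Lemma isIntM x y : isInt x -> isInt y -> isInt (x * y).
Proof. by move=> [a ->] [b ->]; exists (a * b); rewrite intrM. Qed.
Lemma isIntN x : isInt x -> isInt (- x).
Proof. by move=> [a ->]; exists (- a); rewrite rmorphN. Qed.
Lemma isIntB x y : isInt x -> isInt y -> isInt (x - y).
Proof. by move=> ? ?; apply: isIntD => //; apply: isIntN. Qed.
Lemma isInt_sum (I : finType) (F : I -> rat) :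
  (forall i, isInt (F i)) -> isInt (\sum_i F i).
Proof.
move=> H; apply: (big_ind isInt) => //; [exact: isInt0 | exact: isIntD].
Qed.

Lemma noinv (h : int) : isInt (h%:~R^-1) -> h != 0 -> (`|h| = 1)%N.
Proof.
move=> [z Hz] h0.
have /intr_inj hz : (h * z)%:~R = (1 : int)%:~R :> rat.
  by rewrite intrM -Hz mulfV // intr_eq0.
have : (h %| 1)%Z by apply/dvdzP; exists z; rewrite mulrC hz.
by rewrite dvdz1 => /eqP.
Qed.

Definition Gq m (G : 'M[int]_m) : 'M[rat]_m := map_mx (fun z : int => z%:~R) G.

Lemma bform_sum m (G : 'M[int]_m) x y :
  bform G x y = \sum_k (x *m Gq G) 0 k * y 0 k.
Proof. by rewrite /bform /Gq mxE; apply: eq_bigr => k _; rewrite [y^T _ _]mxE. Qed.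

Lemma bformDl m (G : 'M[int]_m) x y z :
  bform G (x + y) z = bform G x z + bform G y z.
Proof. by rewrite !bform_sum -big_split; apply: eq_bigr => k _; rewrite mulmxDl [(x *m _ + _) 0 k]mxE mulrDl. Qed.
Lemma bformZl m (G : 'M[int]_m) a x z :
  bform G (a *: x) z = a * bform G x z.
Proof. by rewrite !bform_sum mulr_sumr; apply: eq_bigr => k _; rewrite -scalemxAl [(a *: (x *m _)) 0 k]mxE mulrA. Qed.
Lemma bformDr m (G : 'M[int]_m) x y z :
  bform G x (y + z) = bform G x y + bform G x z.
Proof. by rewrite !bform_sum -big_split; apply: eq_bigr => k _; rewrite [(y + z) 0 k]mxE mulrDr. Qed.
Lemma bformZr m (G : 'M[int]_m) a x z :
  bform G x (a *: z) = a * bform G x z.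
Proof. by rewrite !bform_sum mulr_sumr; apply: eq_bigr => k _; rewrite [(a *: z) 0 k]mxE mulrCA. Qed.
Lemma bform0r m (G : 'M[int]_m) x : bform G x 0 = 0.
Proof. by have := bformZr G 0 x 0; rewrite scale0r mul0r. Qed.

Lemma lattice_int m (x : 'rV[rat]_m) : lattice_vec x ->
  x = map_mx (fun z : int => z%:~R) (\row_i numq (x 0 i)).
Proof. by move=> H; apply/rowP => i; rewrite !mxE; have [z ->] := H i; rewrite numq_int. Qed.

Lemma lattice_map m (X : 'rV[int]_m) : lattice_vec (map_mx (fun z : int => z%:~R) X).
Proof. by move=> i; rewrite mxE; apply: isInt_int. Qed.

Lemma latticeD m (x y : 'rV[rat]_m) : lattice_vec x -> lattice_vec y -> lattice_vec (x + y).
Proof. by move=> hx hy i; rewrite mxE; apply: isIntD. Qed.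
Lemma latticeZ m (k : rat) (x : 'rV[rat]_m) : isInt k -> lattice_vec x -> lattice_vec (k *: x).
Proof. by move=> hk hx i; rewrite mxE; apply: isIntM. Qed.
Lemma lattice0 m : lattice_vec (0 : 'rV[rat]_m).
Proof. by move=> i; rewrite mxE; apply: isInt0. Qed.

Lemma mulGq_int m (G : 'M[int]_m) x k : lattice_vec x -> isInt ((x *m Gq G) 0 k).
Proof.
move=> hx; rewrite mxE; apply: isInt_sum => j; apply: isIntM => //.
by rewrite mxE; apply: isInt_int.
Qed.

Lemma bform_int m (G : 'M[int]_m) x y : lattice_vec x -> lattice_vec y -> isInt (bform G x y).
Proof.
move=> hx hy; rewrite bform_sum; apply: isInt_sum => k; apply: isIntM => //.
exact: mulGq_int.
Qed.

Lemma bform_sym m (G : 'M[int]_m) x y : G^T = G -> bform G x y = bform G y x.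
Proof.
move=> hG; rewrite /bform.
transitivity ((x *m map_mx (fun z : int => z%:~R) G *m y^T)^T 0 0); first by rewrite [RHS]mxE.
by rewrite !trmx_mul trmxK map_trmx hG mulmxA.
Qed.

Lemma addE11 (A B : 'M[rat]_(1,1)) : (A + B) 0 0 = A 0 0 + B 0 0.
Proof. by rewrite mxE. Qed.

Lemma qf_int m (A : 'M[rat]_m) x y : (forall i j, isInt (A i j)) ->
  lattice_vec x -> lattice_vec y -> isInt ((x *m A *m y^T) 0 0).
Proof.
move=> hA hx hy; rewrite mxE; apply: isInt_sum => k; apply: isIntM.
  by rewrite mxE; apply: isInt_sum => j; apply: isIntM.
by rewrite mxE.
Qed.

Lemma qf_even m (A : 'M[rat]_m) x : A^T = A -> (forall i j, isInt (A i j)) ->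
  (forall i, isInt (A i i / 2)) -> lattice_vec x -> isInt ((x *m A *m x^T) 0 0 / 2).
Proof.
move=> hA hint hdiag hx.
pose U := \matrix_(i, j) (if (i < j)%N then A i j else 0).
pose D := diag_mx (\row_i A i i).
have eA : A = U + U^T + D.
  apply/matrixP => i j; rewrite !mxE.
  case: (ltngtP i j) => h.
  - have ne : i != j by apply/eqP => e; rewrite e ltnn in h.
    by rewrite (negbTE ne) mulr0n !addr0.
  - have ne : i != j by apply/eqP => e; rewrite e ltnn in h.
    rewrite (negbTE ne) mulr0n addr0 add0r.
    by rewrite -[in LHS]hA mxE.
  - have e : i = j by apply: val_inj.
    by rewrite e eqxx mulr1n !add0r.
have eU : (x *m U^T *m x^T) 0 0 = (x *m U *m x^T) 0 0.
  transitivity ((x *m U *m x^T)^T 0 0); last by rewrite [LHS]mxE.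
  by rewrite !trmx_mul trmxK mulmxA.
have eD : (x *m D *m x^T) 0 0 = \sum_k x 0 k * A k k * x 0 k.
  rewrite mul_mx_diag mxE; apply: eq_bigr => k _; by rewrite !mxE.
have -> : (x *m A *m x^T) 0 0 / 2 =
    (x *m U *m x^T) 0 0 + \sum_k x 0 k * (A k k / 2) * x 0 k.
  rewrite {1}eA !mulmxDr !mulmxDl !addE11 eU eD.
  have -> : \sum_k x 0 k * A k k * x 0 k = 2 * \sum_k x 0 k * (A k k / 2) * x 0 k.
    by rewrite mulr_sumr; apply: eq_bigr => k _; field.
  by field.
apply: isIntD.
  apply: qf_int => // i j; rewrite mxE; case: ifP => _ //; exact: isInt0.
by apply: isInt_sum => k; apply: isIntM; [apply: isIntM|].
Qed.

Lemma bezout_row m (C : 'rV[int]_m) :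
  exists X : 'rV[int]_m, forall i, ((\sum_k C ord0 k * X ord0 k) %| C ord0 i)%Z.
Proof.
suff H : forall k, exists X : 'rV[int]_m, forall i : 'I_m, (i < k)%N ->
    ((\sum_j C ord0 j * X ord0 j) %| C ord0 i)%Z.
  by have [X HX] := H m; exists X => i; apply: HX.
elim=> [|k [X HX]]; first by exists 0 => i; rewrite ltn0.
case: (ltnP k m) => hk; last first.
  by exists X => i _; apply: HX; exact: leq_trans (ltn_ord i) hk.
pose kk := Ordinal hk.
set g := \sum_j C ord0 j * X ord0 j in HX.
have [u [w Huw]] := Bezoutz g (C ord0 kk).
pose E : 'rV[int]_m := delta_mx ord0 kk.
exists (u *: X + w *: E).
have -> : \sum_j C ord0 j * (u *: X + w *: E) ord0 j = gcdz g (C ord0 kk).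
  rewrite -Huw.
  have -> : \sum_j C ord0 j * (u *: X + w *: E) ord0 j =
      \sum_j u * (C ord0 j * X ord0 j) + \sum_j w * (C ord0 j * E ord0 j).
    by rewrite -big_split; apply: eq_bigr => j _ /=; rewrite !mxE; ring.
  rewrite -!mulr_sumr; congr (_ + _).
  rewrite (bigD1 kk) //= big1 ?addr0 => [|j /negbTE hj]; last first.
    by rewrite /E mxE hj /= mulr0.
  by rewrite /E mxE !eqxx /= mulr1 mulrC.
move=> i; rewrite ltnS leq_eqVlt => /orP [/eqP e | lt].
  have -> : i = kk by apply: val_inj.
  exact: dvdz_gcdr.
exact: dvdz_trans (dvdz_gcdl _ _) (HX i lt).
Qed.

Lemma gram_sym k (G0 : 'M[int]_k) : G0^T = G0 -> (gram2U_plus G0)^T = gram2U_plus G0.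
Proof.
move=> h; rewrite /gram2U_plus tr_block_mx h !trmx0.
congr block_mx; apply/matrixP => i j; rewrite !mxE addnC //.
Qed.

Lemma gram_diag k (G0 : 'M[int]_k) : (forall i, (2 %| G0 i i)%Z) ->
  forall i, (2 %| gram2U_plus G0 i i)%Z.
Proof.
move=> h i; rewrite /gram2U_plus.
case: (split_ordP i) => i' ->.
  rewrite block_mxEul mxE.
  by case: i' => [[|[|[|[|//]]]] Hi].
by rewrite block_mxEdr.
Qed.

Lemma absz1_sq (g : int) : (`|g| = 1)%N -> g * g = 1.
Proof. by case: g => [[|[|k]]|[|k]]. Qed.

Lemma isInt_eq a b : a = b -> isInt a -> isInt b.
Proof. by move=> ->. Qed.

Theorem lemma5p1 (n : nat) (hn : (3 <= n)%N) (G0 : 'M[int]_(n - 2))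
  (hev : even_gram G0) (hneg : neg_definite G0)
  (hcyc : isotropic_subgroups_cyclic (gram2U_plus G0)) :
  forall e1 e2 : 'rV[rat]_(4 + (n - 2)),
    prim_tot_isotropic_rank2 (gram2U_plus G0) e1 e2 ->
    closure_contains_standard_cusp (gram2U_plus G0) e1 e2.
Proof.
move=> e1 e2 [L1 L2 Hind [H11 H12 H22] Hprim].
set G := gram2U_plus G0.
have Gsym : G^T = G by apply: gram_sym; case: hev.
have Gdiag : forall i, (2 %| G i i)%Z by apply: gram_diag; case: hev.
have bsym : forall x y, bform G x y = bform G y x by move=> x y; apply: bform_sym.
have beven : forall x, lattice_vec x -> exists z : int, bform G x x = (2 * z)%:~R.
  move=> x hx.
  have : isInt (bform G x x / 2).
    apply: qf_even => //.
    - by rewrite map_trmx Gsym.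
    - by move=> i j; rewrite mxE; apply: isInt_int.
    - move=> i; rewrite mxE; have /dvdzP [c ->] := Gdiag i.
      by exists c; rewrite intrM mulfK.
  case=> z hz; exists z; rewrite intrM -hz mulrC mulfK //.
have bint : forall x y, lattice_vec x -> lattice_vec y -> isInt (bform G x y).
  by move=> x y; apply: bform_int.
pose Dp (p q : rat) := forall x, lattice_vec x ->
  isInt (p * bform G e1 x + q * bform G e2 x).
pose S (y : 'rV[rat]_(4 + (n - 2))) := exists p q l,
  [/\ Dp p q, lattice_vec l & y = p *: e1 + q *: e2 + l].
have HS : AL_subgroup G S.
  split.
  - move=> x [p [q [l [hD hl ->]]]] y hy.
    rewrite !bformDl !bformZl; apply: isIntD; [exact: hD | exact: bint].
  - move=> x hx; exists 0, 0, x; split => //; last by rewrite !scale0r !add0r.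
    by move=> y _; rewrite !mul0r addr0; exact: isInt0.
  - move=> x y [p [q [l [hD hl ->]]]] [p' [q' [l' [hD' hl' ->]]]].
    exists (p + p'), (q + q'), (l + l'); split.
    + move=> z hz; apply: (isInt_eq _ (isIntD (hD z hz) (hD' z hz))); ring.
    + exact: latticeD.
    + by apply/rowP => i; rewrite !mxE; ring.
  - move=> x [p [q [l [hD hl ->]]]].
    exists (- p), (- q), (- l); split.
    + move=> z hz; apply: (isInt_eq _ (isIntN (hD z hz))); ring.
    + by move=> i; rewrite mxE; apply: isIntN.
    + by apply/rowP => i; rewrite !mxE; ring.
have HSi : AL_isotropic G S.
  move=> y [p [q [l [hD hl ->]]]].
  set w := p *: e1 + q *: e2.
  have [z1 hz1] := hD l hl.
  have [z2 hz2] := beven l hl.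
  exists (z1 + z2).
  have Bww : bform G w w = 0.
    rewrite /w !bformDl !bformZl !bformDr !bformZr (bsym e2 e1) H11 H12 H22; ring.
  have Bwl : bform G w l = z1%:~R by rewrite /w bformDl !bformZl.
  rewrite bformDl bformDr [bform G l (w + l)]bformDr Bww (bsym l w) Bwl hz2 add0r -!intrD.
  by congr intr; ring.
have [y0 [Sy0 Hy0]] := hcyc S HS HSi.
case: Sy0 => p0 [q0 [l0 [_ hl0 ey0]]].
have key : forall p q, Dp p q ->
    exists k : int, isInt (p - k%:~R * p0) /\ isInt (q - k%:~R * q0).
  move=> p q hD.
  have : S (p *: e1 + q *: e2).
    by exists p, q, 0; split => //; [exact: lattice0 | rewrite addr0].
  case/Hy0 => k [l [hl e]].
  exists k.
  apply: (Hprim (k%:~R *: l0 + l)).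
  - apply: latticeD => //; apply: latticeZ => //; exact: isInt_int.
  - apply/rowP => i; have := congr1 (fun v : 'rV[rat]_(4 + (n - 2)) => v 0 i) e; rewrite ey0 !mxE => ei.
    lra.
have [al [be [a [b [Hab Hpar]]]]] : exists al be a b : int,
    a * be - b * al = 1 /\ p0 * be%:~R = q0 * al%:~R.
  pose A := numq p0 * denq q0. pose B := numq q0 * denq p0.
  have dp0 : (denq p0)%:~R != 0 :> rat by rewrite intr_eq0 denq_neq0.
  have dq0 : (denq q0)%:~R != 0 :> rat by rewrite intr_eq0 denq_neq0.
  have hAB : p0 * B%:~R = q0 * A%:~R.
    rewrite /A /B !intrM -{1}(divq_num_den p0) -{2}(divq_num_den q0).
    move: dp0 dq0; generalize ((numq p0)%:~R : rat) ((denq p0)%:~R : rat)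
      ((numq q0)%:~R : rat) ((denq q0)%:~R : rat) => x1 y1 x2 y2 hy1 hy2.
    by field; rewrite hy1 hy2.
  have [u [w Huw]] := Bezoutz A B.
  case: (eqVneq (gcdz A B) 0) => g0.
  - move: g0 => /eqP; rewrite gcdz_eq0 => /andP [/eqP A0 /eqP B0].
    exists 0, 1, 1, 0; split => //.
    move: A0; rewrite /A => /eqP; rewrite mulf_eq0 (negbTE (denq_neq0 q0)) orbF numq_eq0 => /eqP ->.
    by rewrite mul0r mulr0z mulr0.
  - set g := gcdz A B in g0 Huw *.
    exists (A %/ g)%Z, (B %/ g)%Z, w, (- u).
    have eA : (A %/ g)%Z * g = A by apply: divzK; apply: dvdz_gcdl.
    have eB : (B %/ g)%Z * g = B by apply: divzK; apply: dvdz_gcdr.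
    split.
    + apply: (mulIf g0).
      transitivity (u * ((A %/ g)%Z * g) + w * ((B %/ g)%Z * g)); first by ring.
      by rewrite eA eB Huw mul1r.
    + have g0' : g%:~R != 0 :> rat by rewrite intr_eq0.
      apply: (mulIf g0').
      by rewrite -!mulrA -!intrM eA eB hAB.
have key2 : forall p q, Dp p q -> isInt (p * be%:~R - q * al%:~R).
  move=> p q hD; have [k [h1 h2]] := key p q hD.
  have -> : p * be%:~R - q * al%:~R = (p - k%:~R * p0) * be%:~R
      - (q - k%:~R * q0) * al%:~R + k%:~R * (p0 * be%:~R - q0 * al%:~R) by ring.
  rewrite Hpar subrr mulr0 addr0.
  by apply: isIntB; apply: isIntM => //; exact: isInt_int.
have inv_contra : forall h : int, h != 0 ->
    Dp (a%:~R / h%:~R) (b%:~R / h%:~R) -> (`|h| = 1)%N.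
  move=> h h0 hD; apply: noinv h0.
  have := key2 _ _ hD.
  have -> : a%:~R / h%:~R * be%:~R - b%:~R / h%:~R * al%:~R
      = (h%:~R)^-1 * (a * be - b * al)%:~R :> rat.
    by rewrite intrB !intrM; ring.
  by rewrite Hab mulr1.
exists a, b => v.
have Lv : lattice_vec v.
  by apply: latticeD; apply: latticeZ => //; exact: isInt_int.
have bv : forall x, bform G v x = a%:~R * bform G e1 x + b%:~R * bform G e2 x.
  by move=> x; rewrite /v bformDl !bformZl.
split.
- split => //.
  + apply/eqP => v0; have [ha hb] := Hind _ _ v0.
    move: ha hb => /eqP; rewrite intr_eq0 => /eqP a0 /eqP; rewrite intr_eq0 => /eqP b0.
    by move: Hab; rewrite a0 b0 !mul0r subr0.
  + move=> d hd hl.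
    have [h1 h2] : isInt (d%:R^-1 * a%:~R) /\ isInt (d%:R^-1 * b%:~R).
      by apply: (Hprim _ _ _ hl); rewrite /v scalerDr !scalerA.
    have hdi : isInt ((d%:Z)%:~R^-1).
      apply: (isInt_eq _ (isIntB (isIntM h1 (isInt_int be)) (isIntM h2 (isInt_int al)))).
      have -> : d%:R^-1 * a%:~R * be%:~R - d%:R^-1 * b%:~R * al%:~R
         = d%:R^-1 * (a * be - b * al)%:~R :> rat.
        by rewrite intrB !intrM; ring.
      by rewrite Hab mulr1.
    have := noinv hdi.
    have d0 : d%:Z != 0 by rewrite eqz_nat; case: d hd {hl h1 h2 hdi}.
    move=> /(_ d0) /= d1.
    by rewrite d1 in hd.
- rewrite /isotropic_vec bv /v !bformDr !bformZr (bsym e2 e1) H11 H12 H22; ring.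
pose C : 'rV[int]_(4 + (n - 2)) := \row_k numq ((v *m Gq G) 0 k).
have hC : forall k, (v *m Gq G) 0 k = (C ord0 k)%:~R.
  move=> k; rewrite [C _ _]mxE; have [z ->] := mulGq_int G k Lv.
  by rewrite numq_int.
have bvX : forall X : 'rV[int]_(4 + (n - 2)),
    bform G v (map_mx (fun z : int => z%:~R) X) = (\sum_k C ord0 k * X ord0 k)%:~R.
  move=> X; rewrite bform_sum rmorph_sum; apply: eq_bigr => k _.
  by rewrite hC rmorphM /=; congr (_ * _); rewrite mxE.
have [X HX] := bezout_row C.
set g := \sum_k C ord0 k * X ord0 k in HX bvX.
have hdiv : forall x, lattice_vec x -> exists z : int, bform G v x = (g * z)%:~R.
  move=> x hx; rewrite (lattice_int hx) bvX.
  have : (g %| \sum_k C ord0 k * (\row_i numq (x 0 i)) ord0 k)%Z.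
    by apply: rpred_sum => k _; apply: dvdz_mulr.
  by move/dvdzP => [z ->]; exists z; rewrite mulrC.
case: (eqVneq (`|g|)%N 1%N) => hg.
- have gg := absz1_sq hg.
  move=> z; split; first by move=> _; exact: dvd1z.
  move=> _; exists ((z * g)%:~R *: map_mx (fun z : int => z%:~R) X); split.
  + apply: latticeZ; [exact: isInt_int | exact: lattice_map].
  + by rewrite bformZr bvX -intrM -mulrA gg mulr1.
- exfalso.
  have [h [h0 habs hh]] : exists h : int, [/\ h != 0, (`|h| != 1)%N &
      forall x, lattice_vec x -> isInt (bform G v x / h%:~R)].
    case: (eqVneq g 0) => [g0|gn0].
    + exists 2; split => // x hx; have [z hz] := hdiv x hx.
      by rewrite hz g0 mul0r mulr0z mul0r; exact: isInt0.
    + exists g; split => // x hx; have [z hz] := hdiv x hx.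
      have gq : g%:~R != 0 :> rat by rewrite intr_eq0.
      by exists z; rewrite hz intrM [g%:~R * _]mulrC mulfK.
  have hD : Dp (a%:~R / h%:~R) (b%:~R / h%:~R).
    move=> x hx.
    have -> : a%:~R / h%:~R * bform G e1 x + b%:~R / h%:~R * bform G e2 x
        = bform G v x / h%:~R by rewrite bv; ring.
    exact: hh.
  by move: habs; rewrite inv_contra.
Qed.
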